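(* For any number of features $D$, $Z_1(\boldsymbol\lambda)>1$ for every feasible $\boldsymbol\lambda$ in the positive regions $P=\mathbb R^D_{++}\cup(-\mathbb R^D_{++})$, where $$Z_1(\boldsymbol\lambda)=\pi_1^*\prod_{i=1}^D(1+\pi_2^*\lambda_i)+\pi_2^*\prod_{i=1}^D(1-\pi_1^*\lambda_i).$$
   Context: Setting: a mixture of two Bernoullis on $\{0,1\}^D$. - The true distribution is $p^*(\mathbf x)=\pi_1^*B(\mathbf x\mid\boldsymbol\mu_1^* )+\pi_2^*B(\mathbf x\mid\boldsymbol\mu_2^* )$, where $B(\mathbf x\mid\boldsymbol\mu)=\prod_i\mu_i^{x_i}(1-\mu_i)^{1-x_i}$, $\pi_1^*\in(0,1)$ and $\pi_2^*=1-\pi_1^*$. - Let $\overline{\mathbf x}=\mathbb E_{p^*}[\mathbf x]$, $S_i=\overline x_i(1-\overline x_i)$ and $\boldsymbol\mu^*=(\boldsymbol\mu_1^*-\boldsymbol\mu_2^* )/2$. - For a model component mean $\boldsymbol\mu_1\in[0,1]^D$, set $\mathbf b=\boldsymbol\mu_1-\overline{\mathbf x}$ and $\lambda_i=2S_i^{-1}\mu_i^*b_i$. - The feasible domain of $\boldsymbol\lambda$ is the image of $[0,1]^D$ under this affine map. On it, $1+\pi_2^*\lambda_i\ge0$ and $1-\pi_1^*\lambda_i\ge0$. - $Z_1(\boldsymbol\lambda)$ is the leading-order (small $\pi_1$, $\boldsymbol\mu_2=\overline{\mathbf x}$) factor by which EM multiplies $\pi_1$. - $\mathbb R^D_{++}$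 denotes vectors with all coordinates strictly positive. *)

(* Defs.v *)
From mathcomp Require Import all_boot all_order all_algebra.
Set Implicit Arguments. Unset Strict Implicit. Unset Printing Implicit Defensive.
Import Order.TTheory GRing.Theory Num.Theory.
Local Open Scope ring_scope.

Section Defs.
Variables (R : realFieldType) (D : nat).

(* mean of the true mixture: xbar = pi1s mu1s + pi2s mu2s, pi2s = 1 - pi1s *)
Definition xbar (pi1 : R) (mu1s mu2s : 'I_D -> R) (i : 'I_D) : R :=
  pi1 * mu1s i + (1 - pi1) * mu2s i.

Definition Svar (pi1 : R) (mu1s mu2s : 'I_D -> R) (i : 'I_D) : R :=
  xbar pi1 mu1s mu2s i * (1 - xbar pi1 mu1s mu2s i).

Definition mustar (mu1s mu2s : 'I_D -> R) (i : 'I_D) : R :=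
  (mu1s i - mu2s i) / 2.

Definition lam (pi1 : R) (mu1s mu2s mu1 : 'I_D -> R) (i : 'I_D) : R :=
  2 * (Svar pi1 mu1s mu2s i)^-1 * mustar mu1s mu2s i
    * (mu1 i - xbar pi1 mu1s mu2s i).

Definition Z1 (pi1 : R) (l : 'I_D -> R) : R :=
  pi1 * \prod_(i < D) (1 + (1 - pi1) * l i)
  + (1 - pi1) * \prod_(i < D) (1 - pi1 * l i).

End Defs.

(* Main.v *)
Require Import Defs.
From mathcomp Require Import all_boot all_order all_algebra.
From mathcomp Require Import ring lra.
Set Implicit Arguments. Unset Strict Implicit.
Import Order.TTheory GRing.Theory Num.Theory.
Local Open Scope ring_scope.

Section Aux.
Variables (R : realFieldType) (T : eqType) (p : R) (l : T -> R).
Hypothesis hp : 0 < p < 1.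

Definition Aq (s : seq T) := \prod_(x <- s) (1 + (1 - p) * l x).
Definition Bq (s : seq T) := \prod_(x <- s) (1 - p * l x).
Definition Zq (s : seq T) := p * Aq s + (1 - p) * Bq s.

Lemma pos_AB (s : seq T) :
  (forall x, x \in s -> 0 < l x /\ 0 <= 1 - p * l x) ->
  1 <= Aq s /\ 0 <= Bq s <= 1 /\ (s != [::] -> Bq s < Aq s).
Proof.
elim: s => [|x s IH] H; first by rewrite /Aq /Bq !big_nil lexx ler01.
have [H1 H2] := H x (mem_head _ _).
have [IA [IB _]] := IH (fun y hy => H y (mem_behead (s:=x::s) hy)).
rewrite /Aq /Bq !big_cons -/(Aq s) -/(Bq s).
have ha : 1 < 1 + (1 - p) * l x by case/andP: hp => ? ?; nra.
have hb : 1 - p * l x < 1 by case/andP: hp => ? ?; nra.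
case/andP: IB => IB1 IB2.
split; first nra. split; first (apply/andP; split; nra).
move=> _; nra.
Qed.

Lemma neg_AB (s : seq T) :
  (forall x, x \in s -> l x < 0 /\ 0 <= 1 + (1 - p) * l x) ->
  1 <= Bq s /\ 0 <= Aq s <= 1 /\ (s != [::] -> Aq s < Bq s).
Proof.
elim: s => [|x s IH] H; first by rewrite /Aq /Bq !big_nil lexx ler01.
have [H1 H2] := H x (mem_head _ _).
have [IA [IB _]] := IH (fun y hy => H y (mem_behead (s:=x::s) hy)).
rewrite /Aq /Bq !big_cons -/(Aq s) -/(Bq s).
have ha : 1 + (1 - p) * l x < 1 by case/andP: hp => ? ?; nra.
have hb : 1 < 1 - p * l x by case/andP: hp => ? ?; nra.
case/andP: IB => IB1 IB2.
split; first nra. split; first (apply/andP; split; nra).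
move=> _; nra.
Qed.

Lemma Z_step (s : seq T) :
  (forall x s', x \in s -> (forall y, y \in s' -> y \in s) ->
     0 <= l x * (Aq s' - Bq s') /\ (s' != [::] -> 0 < l x * (Aq s' - Bq s'))) ->
  1 <= Zq s /\ ((2 <= size s)%N -> 1 < Zq s).
Proof.
elim: s => [|x s IH] H.
  by rewrite /Zq /Aq /Bq !big_nil; split => //; lra.
have IH' := IH (fun y s' hy hs' => H y s' (mem_behead (s:=x::s) hy)
                 (fun z hz => mem_behead (s:=x::s) (hs' z hz))).
have [K1 K2] := H x s (mem_head _ _) (fun z hz => mem_behead (s:=x::s) hz).
have E : Zq (x :: s) = Zq s + p * (1 - p) * (l x * (Aq s - Bq s)).
  by rewrite /Zq /Aq /Bq !big_cons /=; ring.
rewrite E.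
have hpq : 0 < p * (1 - p) by case/andP: hp => ? ?; nra.
case: IH' => I1 I2.
split; first nra.
move=> hs.
have ne : s != [::] by case: s hs {I1 I2 K1 K2 E H IH}.
have := K2 ne; nra.
Qed.

End Aux.

Theorem mainTheorem5 (R : realFieldType) (D : nat) (hD : (2 <= D)%N)
  (pi1 : R) (hpi1 : 0 < pi1 < 1)
  (mu1s mu2s : 'I_D -> R)
  (hmu1s : forall i, 0 <= mu1s i <= 1) (hmu2s : forall i, 0 <= mu2s i <= 1)
  (mu1 : 'I_D -> R) (hmu1 : forall i, 0 <= mu1 i <= 1)
  (hP : (forall i, 0 < lam pi1 mu1s mu2s mu1 i) \/
        (forall i, lam pi1 mu1s mu2s mu1 i < 0)) :
  1 < Z1 pi1 (lam pi1 mu1s mu2s mu1).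
Proof.
set l := lam pi1 mu1s mu2s mu1.
have hnz : forall i, l i != 0.
  by move=> i; case: hP => h; [exact: lt0r_neq0 | exact: ltr0_neq0].
have feas : forall i, 0 <= 1 + (1 - pi1) * l i /\ 0 <= 1 - pi1 * l i.
  move=> i.
  have := hnz i; rewrite /l /lam /Svar /mustar.
  set a := mu1s i; set c := mu2s i; set m := mu1 i.
  set x := xbar pi1 mu1s mu2s i.
  have hx : x = pi1 * a + (1 - pi1) * c by [].
  have := hmu1s i; have := hmu2s i; have := hmu1 i.
  rewrite -/a -/c -/m => /andP[m0 m1] /andP[c0 c1] /andP[a0 a1].
  case/andP: hpi1 => p0 p1.
  have X0 : 0 <= x by rewrite hx; nra.
  have X1 : x <= 1 by rewrite hx; nra.
  have S0 : 0 <= x * (1 - x) by nra.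
  have [Sz|Snz] := eqVneq (x * (1 - x)) 0.
    by rewrite Sz invr0 mulr0 !mul0r eqxx.
  move=> _.
  have [nx0 n1x] : x != 0 /\ 1 - x != 0.
    by move: Snz; rewrite mulf_eq0 negb_or => /andP[].
  have Sp : 0 < x * (1 - x) by rewrite lt_def Snz S0.
  have E : 2 * (x * (1 - x))^-1 * ((a - c) / 2) * (m - x)
           = ((a - c) * (m - x)) / (x * (1 - x)) by field; rewrite n1x nx0.
  rewrite E.
  have I1 : 0 <= (1 - m) * x * (1 - a) + m * (1 - x) * a.
    by apply: addr_ge0; repeat apply: mulr_ge0; rewrite ?subr_ge0.
  have I2 : 0 <= (1 - m) * x * (1 - c) + m * (1 - x) * c.
    by apply: addr_ge0; repeat apply: mulr_ge0; rewrite ?subr_ge0.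
  have E1 : 1 + (1 - pi1) * ((a - c) * (m - x) / (x * (1 - x)))
     = ((1 - m) * x * (1 - a) + m * (1 - x) * a) / (x * (1 - x)).
    by apply: (mulIf Snz); rewrite !mulfVK // hx; field; rewrite -hx n1x nx0.
  have E2 : 1 - pi1 * ((a - c) * (m - x) / (x * (1 - x)))
     = ((1 - m) * x * (1 - c) + m * (1 - x) * c) / (x * (1 - x)).
    by apply: (mulIf Snz); rewrite !mulfVK // hx; field; rewrite -hx n1x nx0.
  rewrite E1 E2; split; apply: divr_ge0 => //; exact: ltW.
have conv : Z1 pi1 l = Zq pi1 l (enum 'I_D).
  by rewrite /Z1 /Zq /Aq /Bq !big_enum.
rewrite conv.
suff [_ HH] : 1 <= Zq pi1 l (enum 'I_D) /\
   ((2 <= size (enum 'I_D))%N -> 1 < Zq pi1 l (enum 'I_D)) by apply: HH; rewrite size_enum_ord.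
apply: Z_step => //.
move=> x s' _ hs'.
case: hP => h.
- have := pos_AB hpi1 (s := s') (l := l) (fun y _ => conj (h y) (proj2 (feas y))).
  move=> [K1 [/andP[K2 K3] K]]; have hx : 0 < l x := h x; split; first nra.
  move=> ne; have K' := K ne; nra.
- have := neg_AB hpi1 (s := s') (l := l) (fun y _ => conj (h y) (proj1 (feas y))).
  move=> [K1 [/andP[K2 K3] K]]; have hx : l x < 0 := h x; split; first nra.
  move=> ne; have K' := K ne; nra.
Qed.
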